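(* (1) Each of the following assignments on the generators of $FVB_n$ extends to a representation of $FVB_n$ (all generators not listed are fixed): (a) for $m\in\mathbb{Z}$, $\theta_{1,m}:FVB_n\to{\rm Aut}(F_{2n})$, $\theta_{1,m}(\sigma_i):x_i\mapsto x_{i+1}y_{i+1}^m,\ x_{i+1}\mapsto x_iy_{i+1}^{-m}$; $\theta_{1,m}(\rho_i):x_i\leftrightarrow x_{i+1},\ y_i\leftrightarrow y_{i+1}$; (b) $\theta_2:FVB_n\to{\rm Aut}(F_{2n+1})$, $\theta_2(\sigma_i):x_i\mapsto x_{i+1}y_{i+1}^z,\ x_{i+1}\mapsto x_i(y_{i+1}^{-1})^z$; $\theta_2(\rho_i):x_i\leftrightarrow x_{i+1},\ y_i\leftrightarrow y_{i+1}$; (c) $\theta_3:FVB_n\to{\rm Aut}(K)$, $\theta_3(\sigma_i):x_i\mapsto x_{i+1}y_{i+1},\ x_{i+1}\mapsto x_iy_{i+1}^{-1}$; $\theta_3(\rho_i):x_i\mapsto x_{i+1}z,\ x_{i+1}\mapsto x_iz^{-1},\ y_i\leftrightarrow y_{i+1}$; (d) $\theta_4:FVB_n\to{\rm Aut}(K)$, $\theta_4(\sigma_i):x_i\mapsto x_{i+1}y_{i+1},\ x_{i+1}\mapsto x_iy_{i+1}^{-1}$; $\theta_4(\rho_i):x_i\mapsto x_{i+1}^z,\ x_{i+1}\mapsto x_i^{z^{-1}},\ y_i\leftrightarrow y_{i+1}$. (2) For $m\ne0$, $\ker(\theta_{1,m})=\ker(\theta_2)=\ker(\theta_3)=\ker(\theta_4)=\ker(\theta)$,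 where $\theta:FVB_n\to{\rm Aut}(F_{2n})$ is the representation with $\theta(\sigma_i):x_i\mapsto x_{i+1}y_{i+1},\ x_{i+1}\mapsto x_iy_{i+1}^{-1}$ and $\theta(\rho_i):x_i\leftrightarrow x_{i+1},\ y_i\leftrightarrow y_{i+1}$.
   Context: $FVB_n$ is the flat virtual braid group: generators $\sigma_1,\dots,\sigma_{n-1},\rho_1,\dots,\rho_{n-1}$, relations $\sigma_i\sigma_j=\sigma_j\sigma_i$, $\rho_i\rho_j=\rho_j\rho_i$, $\sigma_i\rho_j=\rho_j\sigma_i$ for $|i-j|\ge2$; $\sigma_i\sigma_{i+1}\sigma_i=\sigma_{i+1}\sigma_i\sigma_{i+1}$; $\rho_i\rho_{i+1}\rho_i=\rho_{i+1}\rho_i\rho_{i+1}$; $\rho_i\rho_{i+1}\sigma_i=\sigma_{i+1}\rho_i\rho_{i+1}$; $\rho_i^2=\sigma_i^2=1$. $F_{2n}$ is free on $x_1,\dots,x_n,y_1,\dots,y_n$; $F_{2n+1}$ is free on $x_1,\dots,x_n,y_1,\dots,y_n,z$; $K=F_n*(F_n\times\mathbb{Z})=\langle x_1,\dots,x_n,y_1,\dots,y_n,z\mid [y_i,z]=1,\ i=1,\dots,n\rangle$. The notation $a^b$ denotes the conjugate $b^{-1}ab$, and ''$a\leftrightarrow b$'' means $a\mapsto b$, $b\mapsto a$. Automorphisms compose on the right: $(fg)(x)=g(f(x))$. *)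

(* Defs.v *)
(* Finitely presented groups are handled as words modulo the
   congruence generated by free cancellation and relators. *)
From mathcomp Require Import all_boot all_algebra.
From mathcomp Require Import zify.
Set Implicit Arguments. Unset Strict Implicit. Unset Printing Implicit Defensive.

(* a letter (a, false) is the generator a, (a, true) is a^-1 *)
Definition letter (A : Type) := (A * bool)%type.
Definition word (A : Type) := seq (letter A).

Definition inv_letter {A : Type} (l : letter A) : letter A := (l.1, ~~ l.2).
Definition winv {A : Type} (w : word A) : word A := rev (map inv_letter w).
Definition gen {A : Type} (a : A) : word A := [:: (a, false)].
Definition igen {A : Type} (a : A) : word A := [:: (a, true)].

Definition wpow {A : Type} (w : word A) (k : int) : word A :=
  match k with
  | Posz n => flatten (nseq n w)
  | Negz n => flatten (nseq n.+1 (winv w))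
  end.

(* conjugate a^b = b^-1 a b *)
Definition wconj {A : Type} (a b : word A) : word A := winv b ++ a ++ b.

Inductive peq {A : Type} (R : word A -> Prop) : word A -> word A -> Prop :=
| peq_refl w : peq R w w
| peq_sym u v : peq R u v -> peq R v u
| peq_trans u v w : peq R u v -> peq R v w -> peq R u w
| peq_cancel u a v : peq R (u ++ a :: inv_letter a :: v) (u ++ v)
| peq_rel u r v : R r -> peq R (u ++ r ++ v) (u ++ v).

Definition eqrel {A : Type} (u v : word A) : word A := u ++ winv v.

Definition norels {A : Type} : word A -> Prop := fun _ => False.

Definition wsubst {A B : Type} (f : A -> word B) (w : word A) : word B :=
  flatten (map (fun l : letter A => if l.2 then winv (f l.1) else f l.1) w).

Definition is_hom {A : Type} (R : word A -> Prop) (f : A -> word A) : Prop :=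
  forall r, R r -> peq R (wsubst f r) [::].

(* Action of a word q = l1 ... lk in the generators of Gamma, where each letter l
   acts via Phi l; automorphisms compose on the right: (fg)(x) = g(f(x)). *)
Definition act {Y X : Type} (Phi : letter Y -> X -> word X) (q : word Y) (x : X)
  : word X :=
  foldl (fun w l => wsubst (Phi l) w) (gen x) q.

(* Phi is a homomorphism Gamma = <Y | Q> -> Aut(<X | R>) whose value on the
   generator y is phi y: every Phi l is an endomorphism of <X|R>, Phi of an
   inverse letter is inverse to Phi of the letter (so all are automorphisms),
   and every relator of Gamma acts trivially. *)
Definition rep_witness {Y X : Type} (Q : word Y -> Prop) (R : word X -> Prop)
  (phi : Y -> X -> word X) (Phi : letter Y -> X -> word X) : Prop :=
  [/\ forall y, Phi (y, false) = phi y,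
      forall l, is_hom R (Phi l),
      forall l x, peq R (wsubst (Phi (inv_letter l)) (Phi l x)) (gen x)
    & forall q, Q q -> forall x, peq R (act Phi q x) (gen x)].

Definition extends_to_rep {Y X : Type} (Q : word Y -> Prop) (R : word X -> Prop)
  (phi : Y -> X -> word X) : Prop := exists Phi, rep_witness Q R phi Phi.

Definition in_ker {Y X : Type} (Q : word Y -> Prop) (R : word X -> Prop)
  (phi : Y -> X -> word X) (w : word Y) : Prop :=
  forall Phi, rep_witness Q R phi Phi -> forall x, peq R (act Phi w x) (gen x).

(* Sig i (i : 'I_n.-1, 0-based) stands for sigma_{i+1}, Rho i for rho_{i+1} *)
Inductive fvb_gen (n : nat) : Type := Sig of 'I_n.-1 | Rho of 'I_n.-1.

Definition far (i j : nat) : bool := (i.+1 < j) || (j.+1 < i).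

Inductive fvb_rel (n : nat) : word (fvb_gen n) -> Prop :=
| fr_ss (i j : 'I_n.-1) : far i j ->
    fvb_rel (eqrel (gen (Sig i) ++ gen (Sig j)) (gen (Sig j) ++ gen (Sig i)))
| fr_rr (i j : 'I_n.-1) : far i j ->
    fvb_rel (eqrel (gen (Rho i) ++ gen (Rho j)) (gen (Rho j) ++ gen (Rho i)))
| fr_sr (i j : 'I_n.-1) : far i j ->
    fvb_rel (eqrel (gen (Sig i) ++ gen (Rho j)) (gen (Rho j) ++ gen (Sig i)))
| fr_sss (i j : 'I_n.-1) : j = i.+1 :> nat ->
    fvb_rel (eqrel (gen (Sig i) ++ gen (Sig j) ++ gen (Sig i))
                   (gen (Sig j) ++ gen (Sig i) ++ gen (Sig j)))
| fr_rrr (i j : 'I_n.-1) : j = i.+1 :> nat ->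
    fvb_rel (eqrel (gen (Rho i) ++ gen (Rho j) ++ gen (Rho i))
                   (gen (Rho j) ++ gen (Rho i) ++ gen (Rho j)))
| fr_rrs (i j : 'I_n.-1) : j = i.+1 :> nat ->
    fvb_rel (eqrel (gen (Rho i) ++ gen (Rho j) ++ gen (Sig i))
                   (gen (Sig j) ++ gen (Rho i) ++ gen (Rho j)))
| fr_r2 (i : 'I_n.-1) : fvb_rel (gen (Rho i) ++ gen (Rho i))
| fr_s2 (i : 'I_n.-1) : fvb_rel (gen (Sig i) ++ gen (Sig i)).

Lemma lo_proof (n : nat) (i : 'I_n.-1) : (i : nat) < n.
Proof. have := ltn_ord i; lia. Qed.
Lemma hi_proof (n : nat) (i : 'I_n.-1) : (i : nat).+1 < n.
Proof. have := ltn_ord i; lia. Qed.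

Definition lo (n : nat) (i : 'I_n.-1) : 'I_n := Ordinal (lo_proof i).
Definition hi (n : nat) (i : 'I_n.-1) : 'I_n := Ordinal (hi_proof i).

Definition swp (n : nat) (i : 'I_n.-1) (k : 'I_n) : 'I_n :=
  if k == lo i then hi i else if k == hi i then lo i else k.

(* generators of F_{2n}: x_1..x_n, y_1..y_n (0-based indices) *)
Inductive gen2 (n : nat) : Type := x2 of 'I_n | y2 of 'I_n.
(* generators of F_{2n+1} and of K: x_1..x_n, y_1..y_n, z *)
Inductive gen3 (n : nat) : Type := x3 of 'I_n | y3 of 'I_n | z3.

(* F_{2n+1}: no relators; K = F_n * (F_n x Z): relators [y_i, z] *)
Inductive K_rel (n : nat) : word (gen3 n) -> Prop :=
| K_comm (i : 'I_n) :
    K_rel (igen (y3 i) ++ igen (z3 n) ++ gen (y3 i) ++ gen (z3 n)).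

Definition theta1 (n : nat) (m : int) (a : fvb_gen n) (g : gen2 n) : word (gen2 n) :=
  match a with
  | Sig i => match g with
     | x2 k => if k == lo i then gen (x2 (hi i)) ++ wpow (gen (y2 (hi i))) m
               else if k == hi i then gen (x2 (lo i)) ++ wpow (gen (y2 (hi i))) (- m)
               else gen (x2 k)
     | y2 k => gen (y2 k)
     end
  | Rho i => match g with
     | x2 k => gen (x2 (swp i k))
     | y2 k => gen (y2 (swp i k))
     end
  end.

Definition theta (n : nat) (a : fvb_gen n) (g : gen2 n) : word (gen2 n) :=
  match a with
  | Sig i => match g with
     | x2 k => if k == lo i then gen (x2 (hi i)) ++ gen (y2 (hi i))
               else if k == hi i then gen (x2 (lo i)) ++ igen (y2 (hi i))
               else gen (x2 k)
     | y2 k => gen (y2 k)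
     end
  | Rho i => match g with
     | x2 k => gen (x2 (swp i k))
     | y2 k => gen (y2 (swp i k))
     end
  end.

Definition theta2 (n : nat) (a : fvb_gen n) (g : gen3 n) : word (gen3 n) :=
  match a with
  | Sig i => match g with
     | x3 k => if k == lo i then gen (x3 (hi i)) ++ wconj (gen (y3 (hi i))) (gen (z3 n))
               else if k == hi i then
                 gen (x3 (lo i)) ++ wconj (igen (y3 (hi i))) (gen (z3 n))
               else gen (x3 k)
     | y3 k => gen (y3 k)
     | z3 => gen (z3 n)
     end
  | Rho i => match g with
     | x3 k => gen (x3 (swp i k))
     | y3 k => gen (y3 (swp i k))
     | z3 => gen (z3 n)
     end
  end.

Definition thetaK_sig (n : nat) (i : 'I_n.-1) (g : gen3 n) : word (gen3 n) :=
  match g with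
  | x3 k => if k == lo i then gen (x3 (hi i)) ++ gen (y3 (hi i))
            else if k == hi i then gen (x3 (lo i)) ++ igen (y3 (hi i))
            else gen (x3 k)
  | y3 k => gen (y3 k)
  | z3 => gen (z3 n)
  end.

Definition theta3 (n : nat) (a : fvb_gen n) (g : gen3 n) : word (gen3 n) :=
  match a with
  | Sig i => thetaK_sig i g
  | Rho i => match g with
     | x3 k => if k == lo i then gen (x3 (hi i)) ++ gen (z3 n)
               else if k == hi i then gen (x3 (lo i)) ++ igen (z3 n)
               else gen (x3 k)
     | y3 k => gen (y3 (swp i k))
     | z3 => gen (z3 n)
     end
  end.

Definition theta4 (n : nat) (a : fvb_gen n) (g : gen3 n) : word (gen3 n) :=
  match a with
  | Sig i => thetaK_sig i g
  | Rho i => match g with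
     | x3 k => if k == lo i then wconj (gen (x3 (hi i))) (gen (z3 n))
               else if k == hi i then wconj (gen (x3 (lo i))) (igen (z3 n))
               else gen (x3 k)
     | y3 k => gen (y3 (swp i k))
     | z3 => gen (z3 n)
     end
  end.

(* Main.v *)
Require Import Defs.
From mathcomp Require Import all_boot all_algebra zify.
Set Implicit Arguments. Unset Strict Implicit. Unset Printing Implicit Defensive.
Import GRing.Theory Num.Theory.

Section Words.
Variable A : Type.
Implicit Types (u v w p s : word A) (a : letter A).

Lemma inv_letterK a : inv_letter (inv_letter a) = a.
Proof. by case: a => x b; rewrite /inv_letter /= negbK. Qed.

Lemma winv_cat u v : winv (u ++ v) = winv v ++ winv u.
Proof. by rewrite /winv map_cat rev_cat. Qed.

Lemma winv_cons a u : winv (a :: u) = winv u ++ [:: inv_letter a].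
Proof. by rewrite /winv /= rev_cons cats1. Qed.

Lemma winvK u : winv (winv u) = u.
Proof. by rewrite /winv map_rev revK -map_comp (eq_map inv_letterK) map_id. Qed.

Lemma winv_nil : winv ([::] : word A) = [::]. Proof. by []. Qed.

Lemma flatten_nseq_rcons (x : word A) c :
  flatten (nseq c.+1 x) = flatten (nseq c x) ++ x.
Proof. elim: c => [|c IH] /=; first by rewrite cats0. by rewrite -catA -IH. Qed.

Lemma winv_flatten_nseq c (x : word A) :
  winv (flatten (nseq c x)) = flatten (nseq c (winv x)).
Proof.
elim: c => [//|c IH]; rewrite [in LHS]/= winv_cat IH.
by rewrite -flatten_nseq_rcons.
Qed.

End Words.
Section Subst.
Variables A B : Type.
Implicit Types (u v w p s : word A) (a : letter A).
Implicit Types (f g : A -> word B).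

Lemma wsubst_cat f u v : wsubst f (u ++ v) = wsubst f u ++ wsubst f v.
Proof. by rewrite /wsubst map_cat flatten_cat. Qed.

Lemma wsubst_cons f a u :
  wsubst f (a :: u) = (if a.2 then winv (f a.1) else f a.1) ++ wsubst f u.
Proof. by []. Qed.

Lemma wsubst_nil f : wsubst f [::] = [::]. Proof. by []. Qed.

Lemma wsubst_gen f x : wsubst f (gen x) = f x.
Proof. by rewrite /wsubst /= cats0. Qed.

Lemma wsubst_igen f x : wsubst f (igen x) = winv (f x).
Proof. by rewrite /wsubst /= cats0. Qed.

Lemma wsubst_winv f u : wsubst f (winv u) = winv (wsubst f u).
Proof.
elim: u => [//|a u IH]; rewrite winv_cons wsubst_cat IH (wsubst_cons f a u) winv_cat.
congr (_ ++ _); case: a => x [];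
by rewrite /wsubst /inv_letter /= cats0 ?winvK.
Qed.

Lemma eq_wsubst f g u : (forall x, f x = g x) -> wsubst f u = wsubst g u.
Proof. by move=> H; rewrite /wsubst; congr flatten; apply: eq_map => l; rewrite H. Qed.

Lemma wsubst_flatten_nseq f c x :
  wsubst f (flatten (nseq c x)) = flatten (nseq c (wsubst f x)).
Proof. by elim: c => [//|c IH] /=; rewrite wsubst_cat IH. Qed.

Lemma wsubst_wpow f x k : wsubst f (wpow x k) = wpow (wsubst f x) k.
Proof. by case: k => c; rewrite /wpow wsubst_flatten_nseq ?wsubst_winv. Qed.

End Subst.
Section Words2.
Variable A : Type.
Implicit Types (u v w p s : word A) (a : letter A).
Lemma wsubst_id u : wsubst (@gen A) u = u.
Proof. by elim: u => [//|[x []] u IH]; rewrite wsubst_cons IH. Qed.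

Lemma wsubst_comp (B C : Type) (f : A -> word B) (g : B -> word C) u :
  wsubst g (wsubst f u) = wsubst (fun x => wsubst g (f x)) u.
Proof.
elim: u => [//|a u IH]; rewrite !wsubst_cons wsubst_cat IH; congr (_ ++ _).
by case: a.2; rewrite ?wsubst_winv.
Qed.

Lemma wpow_nil k : wpow ([::] : word A) k = [::].
Proof. by case: k => c /=; elim: c. Qed.

Variable R : word A -> Prop.
Notation peq := (peq R).

Lemma peq_ctx p s u v : peq u v -> peq (p ++ u ++ s) (p ++ v ++ s).
Proof.
elim=> {u v}.
- by move=> w; apply: peq_refl.
- by move=> u v _ H; apply: peq_sym.
- by move=> u v w _ H1 _ H2; apply: peq_trans H2.
- move=> u a v; rewrite -!catA /= catA [p ++ (u ++ v ++ s)]catA.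
  exact: peq_cancel.
- move=> u r v Hr; rewrite -!catA catA [p ++ (u ++ v ++ s)]catA.
  exact: peq_rel.
Qed.

Lemma peq_cat u u' v v' : peq u u' -> peq v v' -> peq (u ++ v) (u' ++ v').
Proof.
move=> H1 H2; apply: (peq_trans (v:=u' ++ v)).
  by have := peq_ctx [::] v H1; rewrite /=.
by have := peq_ctx u' [::] H2; rewrite !cats0.
Qed.

Lemma peq_catl p u v : peq u v -> peq (p ++ u) (p ++ v).
Proof. by move=> H; apply: peq_cat => //; apply: peq_refl. Qed.

Lemma peq_catr s u v : peq u v -> peq (u ++ s) (v ++ s).
Proof. by move=> H; apply: peq_cat => //; apply: peq_refl. Qed.

Lemma peq_cancel1 a : peq [:: a; inv_letter a] [::].
Proof. by have := @peq_cancel _ R [::] a [::]. Qed.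

Lemma peq_cancel1' a : peq [:: inv_letter a; a] [::].
Proof. by have := peq_cancel1 (inv_letter a); rewrite inv_letterK. Qed.

Lemma peq_winv_r u : peq (u ++ winv u) [::].
Proof.
elim: u => [|a u IH]; first exact: peq_refl.
rewrite winv_cons /= catA.
apply: (peq_trans (v:=(a :: [::] ++ [:: inv_letter a]))); last exact: peq_cancel1.
by have := peq_ctx [:: a] [:: inv_letter a] IH.
Qed.

Lemma peq_winv_l u : peq (winv u ++ u) [::].
Proof. by have := peq_winv_r (winv u); rewrite winvK. Qed.

Lemma peq_rel0 r : R r -> peq r [::].
Proof. by move=> Hr; have := @peq_rel _ R [::] r [::] Hr; rewrite /= cats0. Qed.

Lemma peq_winv u v : peq u v -> peq (winv u) (winv v).
Proof.
elim=> {u v}.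
- by move=> w; apply: peq_refl.
- by move=> u v _ H; apply: peq_sym.
- by move=> u v w _ H1 _ H2; apply: peq_trans H2.
- move=> u a v; rewrite !winv_cat !winv_cons /= -!catA /= inv_letterK.
  exact: peq_cancel.
- move=> u r v Hr; rewrite !winv_cat -catA; apply: peq_catl.
  have H : peq (winv r) [::].
    apply: (peq_trans (v:=(winv r ++ r))); last exact: peq_winv_l.
    by have := peq_catl (winv r) (peq_sym (peq_rel0 Hr)); rewrite cats0.
  by have := peq_catr (winv u) H.
Qed.

Definition comm u v := peq (u ++ v) (v ++ u).

Lemma comm_sym u v : comm u v -> comm v u.
Proof. by move=> H; apply: peq_sym. Qed.

Lemma comm_nil u : comm u [::].
Proof. by rewrite /comm cats0; apply: peq_refl. Qed.

Lemma comm_cat u v1 v2 : comm u v1 -> comm u v2 -> comm u (v1 ++ v2).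
Proof.
move=> H1 H2; rewrite /comm.
apply: (peq_trans (v:=v1 ++ u ++ v2)).
  by have := peq_catr v2 H1; rewrite -!catA.
by have := peq_catl v1 H2; rewrite -!catA.
Qed.

Lemma comm_winv u v : comm u v -> comm u (winv v).
Proof.
move=> H; rewrite /comm.
apply: (peq_trans (v:=winv v ++ v ++ u ++ winv v)).
  by have := peq_catr (u ++ winv v) (peq_sym (peq_winv_l v)); rewrite /= -!catA.
apply: (peq_trans (v:=winv v ++ u ++ v ++ winv v)).
  by apply: peq_catl; have := peq_catr (winv v) (peq_sym H); rewrite -!catA.
apply: peq_catl.
by have := peq_catl u (peq_winv_r v); rewrite cats0.
Qed.

Lemma comm_flatten_nseq u v c : comm u v -> comm u (flatten (nseq c v)).
Proof. by move=> H; elim: c => [|c IH] /=; [apply: comm_nil | apply: comm_cat]. Qed.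

Lemma comm_wpow u v k : comm u v -> comm u (wpow v k).
Proof. by case: k => c H; rewrite /wpow; apply: comm_flatten_nseq => //; apply: comm_winv. Qed.

Lemma comm_wpow2 u v k l : comm u v -> comm (wpow u k) (wpow v l).
Proof. by move=> H; apply: comm_sym; apply: comm_wpow; apply: comm_sym; apply: comm_wpow. Qed.

Lemma comm_refl u : comm u u. Proof. exact: peq_refl. Qed.

End Words2.
Section Homs.
Variables A B : Type.
Variable R : word A -> Prop.
Variable R' : word B -> Prop.

Definition homR (f : A -> word B) := forall r, R r -> peq R' (wsubst f r) [::].

Lemma wsubst_peq (f : A -> word B) (u v : word A) : homR f -> peq R u v -> peq R' (wsubst f u) (wsubst f v).
Proof.
move=> Hf; elim=> {u v}.
- by move=> w; apply: peq_refl.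
- by move=> u v _ H; apply: peq_sym.
- by move=> u v w _ H1 _ H2; apply: peq_trans H2.
- move=> u a v; rewrite !wsubst_cat; apply: peq_catl.
  rewrite !wsubst_cons catA.
  apply: (peq_catr (wsubst f v) (v := [::])).
  by case: a => x [] /=; [exact: peq_winv_l | exact: peq_winv_r].
- move=> u r v Hr; rewrite !wsubst_cat; apply: peq_catl.
  by have := peq_catr (wsubst f v) (Hf r Hr).
Qed.

Lemma wsubst_pw (f g : A -> word B) (u : word A) : (forall x, peq R' (f x) (g x)) -> peq R' (wsubst f u) (wsubst g u).
Proof.
move=> H; elim: u => [|a u IH]; first exact: peq_refl.
rewrite !wsubst_cons; apply: peq_cat => //.
by case: a.2; [apply: peq_winv|]; apply: H.
Qed.

End Homs.

Lemma homR_norels (A B : Type) (R' : word B -> Prop) (f : A -> word B) : homR norels R' f.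
Proof. by []. Qed.

Lemma homR_comp (A B C : Type) (R : word A -> Prop) (R' : word B -> Prop) (R'' : word C -> Prop)
  f g : homR R R' f -> homR R' R'' g -> homR R R'' (fun x => wsubst g (f x)).
Proof.
move=> Hf Hg r Hr; rewrite -wsubst_comp.
by have := wsubst_peq Hg (Hf r Hr).
Qed.

Definition actw {Y X : Type} (Phi : letter Y -> X -> word X) (q : word Y) (u : word X) :=
  foldl (fun w l => wsubst (Phi l) w) u q.

Section Act.
Variables Y X : Type.
Variable Phi : letter Y -> X -> word X.

Lemma act_actw q x : act Phi q x = actw Phi q (gen x). Proof. by []. Qed.

Lemma actw_cons l q u : actw Phi (l :: q) u = actw Phi q (wsubst (Phi l) u).
Proof. by []. Qed.

Lemma act_cons l q x : act Phi (l :: q) x = actw Phi q (Phi l x).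
Proof. by rewrite act_actw actw_cons wsubst_gen. Qed.

Lemma actw_wsubst q u : actw Phi q u = wsubst (act Phi q) u.
Proof.
elim: q u => [|l q IH] u; first by rewrite wsubst_id.
rewrite actw_cons IH wsubst_comp; apply: eq_wsubst => x.
by rewrite act_cons IH.
Qed.

Lemma actw_cat q u v : actw Phi q (u ++ v) = actw Phi q u ++ actw Phi q v.
Proof. by rewrite !actw_wsubst wsubst_cat. Qed.

Lemma actw_gen q x : actw Phi q (gen x) = act Phi q x. Proof. by []. Qed.

Lemma actw_winv q u : actw Phi q (winv u) = winv (actw Phi q u).
Proof. by rewrite !actw_wsubst wsubst_winv. Qed.

Lemma actw_wpow q u k : actw Phi q (wpow u k) = wpow (actw Phi q u) k.
Proof. by rewrite !actw_wsubst wsubst_wpow. Qed.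

Lemma actw_peq (R : word X -> Prop) q u v : (forall l, is_hom R (Phi l)) ->
  peq R u v -> peq R (actw Phi q u) (actw Phi q v).
Proof.
move=> H; elim: q u v => [|l q IH] u v Huv //.
rewrite !actw_cons; apply: IH; apply: (wsubst_peq (R:=R)) Huv; exact: H.
Qed.

End Act.

Definition PhiC {Y X : Type} (phi : Y -> X -> word X) : letter Y -> X -> word X :=
  fun l => phi l.1.

Lemma witness_unique {Y X : Type} (Q : word Y -> Prop) (R : word X -> Prop)
  (phi : Y -> X -> word X) Psi :
  rep_witness Q R phi Psi ->
  (forall y x, peq R (wsubst (phi y) (phi y x)) (gen x)) ->
  forall q x, peq R (act Psi q x) (act (PhiC phi) q x).
Proof.
case=> H1 H2 H3 H4 Hinv.
have Hpw : forall l x, peq R (Psi l x) (PhiC phi l x).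
  case=> y [] x; last by rewrite H1; apply: peq_refl.
  rewrite /PhiC /=.
  apply: (peq_trans (v := wsubst (Psi (y, true)) (wsubst (phi y) (phi y x)))).
    rewrite -[X in peq _ X _]wsubst_gen.
    by apply: wsubst_peq; [apply: H2 | apply: peq_sym].
  rewrite wsubst_comp -[X in peq _ _ X]wsubst_id; apply: wsubst_pw => a.
  by have := H3 (y, false) a; rewrite H1.
move=> q x; rewrite !act_actw.
elim: q (gen x) => [|l q IH] u; first exact: peq_refl.
rewrite !actw_cons.
apply: (peq_trans (v := actw Psi q (wsubst (PhiC phi l) u))); last exact: IH.
by apply: actw_peq => //; apply: wsubst_pw.
Qed.

Lemma in_ker_iff {Y X : Type} (Q : word Y -> Prop) (R : word X -> Prop)
  (phi : Y -> X -> word X) w :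
  rep_witness Q R phi (PhiC phi) ->
  in_ker Q R phi w <-> (forall x, peq R (act (PhiC phi) w x) (gen x)).
Proof.
move=> HW; split; first by move=> H; apply: H.
move=> H Psi HPsi x.
have Hinv : forall y x, peq R (wsubst (phi y) (phi y x)) (gen x).
  by case: HW => _ _ H3 _ y x'; have := H3 (y, false) x'.
apply: peq_trans (H x); exact: (witness_unique HPsi Hinv).
Qed.

Section Weight.
Variable A : Type.
Definition wt (c : A -> int) (w : word A) : int :=
  foldr (fun l s => ((if l.2 then - c l.1 else c l.1) + s)%R) 0%R w.

Lemma wt_cat c u v : wt c (u ++ v) = (wt c u + wt c v)%R.
Proof. elim: u => [|a u IH] /=; first by rewrite add0r. by rewrite IH addrA. Qed.

Lemma wt_winv c u : wt c (winv u) = (- wt c u)%R.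
Proof.
elim: u => [|a u IH]; first by rewrite /= oppr0.
rewrite winv_cons wt_cat IH /= addr0 opprD addrC; case: a.2 => //=.
by rewrite opprK.
Qed.

Lemma peq_wt c (R : word A -> Prop) u v : (forall r, R r -> wt c r = 0%R) ->
  peq R u v -> wt c u = wt c v.
Proof.
move=> HR; elim=> {u v} //.
- by move=> u v w _ -> _ ->.
- move=> u a v; rewrite !wt_cat; congr (_ + _)%R.
  rewrite /= addrA; case: a => x [] /=; by rewrite ?opprK ?addNr ?addrN add0r.
- by move=> u r v Hr; rewrite !wt_cat (HR r Hr) add0r.
Qed.

Lemma wt0 (u : word A) : wt (fun _ => 0%R) u = 0%R.
Proof. elim: u => [//|a u IH] /=. by rewrite IH; case: a.2; rewrite ?oppr0. Qed.

Lemma eq_wt (c c' : A -> int) u : (forall x, c x = c' x) -> wt c u = wt c' u.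
Proof. move=> H; elim: u => [//|a u IH] /=. by rewrite IH H. Qed.

End Weight.

Lemma wt_wsubst (A B : Type) (c : B -> int) (f : A -> word B) (u : word A) :
  wt c (wsubst f u) = wt (fun x => wt c (f x)) u.
Proof.
elim: u => [//|a u IH]; rewrite wsubst_cons wt_cat IH /=.
by case: a.2; rewrite ?wt_winv.
Qed.

Section Pow.
Variable A : Type.
Variable R : word A -> Prop.
Implicit Types (u : word A).

Lemma wpow0 u : wpow u 0 = [::]. Proof. by []. Qed.

Lemma wpow_add1 u e : peq R (wpow u 1 ++ wpow u e) (wpow u (1 + e)%R).
Proof.
case: e => [c|c].
- have -> : (1 + Posz c)%R = Posz c.+1 by [].
  rewrite /wpow /= cats0; exact: peq_refl.
- case: c => [|c].
  + have -> : (1 + Negz 0)%R = 0%R by [].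
    rewrite /wpow /= !cats0; exact: peq_winv_r.
  + have -> : (1 + Negz c.+1)%R = Negz c by rewrite !NegzE; lia.
    rewrite /wpow /= cats0 catA.
    by have := peq_catr (flatten (nseq c.+1 (winv u))) (peq_winv_r R u).
Qed.

Lemma wpow_addN1 u e : peq R (wpow u (-1) ++ wpow u e) (wpow u (-1 + e)%R).
Proof.
case: e => [c|c].
- case: c => [|c].
  + rewrite addr0 /= cats0; exact: peq_refl.
  + have -> : (-1 + Posz c.+1)%R = Posz c by lia.
    rewrite /wpow /= cats0 catA.
    by have := peq_catr (flatten (nseq c u)) (peq_winv_l R u).
- have -> : (-1 + Negz c)%R = Negz c.+1 by rewrite !NegzE; lia.
  rewrite /wpow /= cats0; exact: peq_refl.
Qed.

Lemma wpow_add_small u d e : (d = 0 \/ d = 1 \/ d = -1)%R ->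
  peq R (wpow u d ++ wpow u e) (wpow u (d + e)%R).
Proof.
case=> [->|[->|->]]; [rewrite add0r; exact: peq_refl | exact: wpow_add1 | exact: wpow_addN1].
Qed.

End Pow.

Section Red.
Variable A : eqType.
Implicit Types (u v w s : word A) (a b : letter A).

Definition push a s : word A :=
  if s is b :: s' then (if b == inv_letter a then s' else a :: s) else [:: a].
Definition red w := foldr push [::] w.
Fixpoint reduced s : bool :=
  if s is a :: s' then
    (if s' is b :: _ then (b != inv_letter a) else true) && reduced s'
  else true.

Lemma reduced_cons a s : reduced (a :: s) -> reduced s.
Proof. by case/andP. Qed.

Lemma push_reduced a s : reduced s -> reduced (push a s).
Proof.
case: s => [//|b s] /= Hs.
case: ifP => Hb; first exact: reduced_cons Hs.
by rewrite /= Hb.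
Qed.

Lemma red_reduced w : reduced (red w).
Proof. elim: w => [//|a w IH] /=; exact: push_reduced. Qed.

Lemma push_inv a s : reduced s -> push (inv_letter a) (push a s) = s.
Proof.
case: s => [|b s] /=; first by rewrite inv_letterK eqxx.
case: ifP => [/eqP Hb|Hb].
- case: s => [|c s] /=; first by move=> _; rewrite Hb.
  case/andP=> Hc _; rewrite inv_letterK.
  case: ifP => [/eqP Hca|]; last by rewrite Hb.
  by move: Hc; rewrite Hb Hca inv_letterK eqxx.
- by move=> _; rewrite /= inv_letterK eqxx.
Qed.

Lemma red_cat u v : red (u ++ v) = foldr push (red v) u.
Proof. by rewrite /red foldr_cat. Qed.

Lemma peq_red u v : peq norels u v -> red u = red v.
Proof.
elim=> {u v} //.
- by move=> u v w _ -> _ ->.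
- move=> u a v; rewrite !red_cat /=.
  by rewrite -{1}(inv_letterK a) push_inv // red_reduced.
Qed.

Lemma red_peq (R : word A -> Prop) w : peq R w (red w).
Proof.
elim: w => [|a w IH]; first exact: peq_refl.
apply: (peq_trans (v := a :: red w)); first by have := peq_catl [:: a] IH.
rewrite /= /push; case E: (red w) => [|b s]; first exact: peq_refl.
case: ifP => [/eqP Hb|_]; last exact: peq_refl.
rewrite Hb; exact: (@peq_cancel _ R [::] a s).
Qed.

Lemma reduced_red s : reduced s -> red s = s.
Proof.
elim: s => [//|a s IH] Hs /=; rewrite IH; last exact: reduced_cons Hs.
move: Hs; case: s {IH} => [//|b s] /= /andP [Hb _].
by rewrite (negbTE Hb).
Qed.

Lemma peq_nil_red w : peq norels w [::] -> red w = [::].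
Proof. by move/peq_red. Qed.

End Red.
Section PowInj.
Variable A : eqType.
Implicit Types (V t : word A) (a : letter A).

Definition blk (c : nat) (s : bool) (l : letter A) : word A := nseq c (l.1, l.2 (+) s).

Lemma inv_neq a : (a == inv_letter a) = false.
Proof. by case: a => x b; rewrite /inv_letter xpair_eqE eqxx /=; case: b. Qed.

Lemma reduced_nseq_cat a c t : reduced t ->
  (if t is b :: _ then b != inv_letter a else true) -> reduced (nseq c a ++ t).
Proof.
move=> Ht Hh; elim: c => [//|c IH] /=; rewrite IH andbT.
by case: c {IH} => [|c] //=; rewrite inv_neq.
Qed.

Lemma reduced_blk c s x V : 0 < c -> reduced (x :: V) ->
  reduced (blk c s x ++ flatten (map (blk c s) V)).
Proof.
move=> Hc; elim: V x => [|y V IH] x /=.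
  by move=> _; rewrite cats0 -[blk c s x]cats0; apply: reduced_nseq_cat.
rewrite -/(reduced (y :: V)).
case/andP=> Hyx Hr; apply: reduced_nseq_cat; first exact: IH.
rewrite /blk; case: c Hc {IH} => [//|c] _ /=.
apply: contra Hyx; case: x y {Hr} => x1 x2 [y1 y2].
rewrite /inv_letter !xpair_eqE /= => /andP [/eqP -> /eqP H].
by rewrite eqxx /=; apply/eqP; move: H; case: x2; case: y2; case: s.
Qed.

Lemma reduced_flatten_blk c s V : 0 < c -> reduced V ->
  reduced (flatten (map (blk c s) V)).
Proof. case: V => [//|x V] Hc H /=; exact: reduced_blk. Qed.

Definition pw (m : int) (V : word A) : word A := wsubst (fun i => wpow (gen i) m) V.

Lemma flatten_nseq1 c (a : letter A) : flatten (nseq c [:: a]) = nseq c a.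
Proof. by elim: c => [//|c IH] /=; rewrite IH. Qed.

Lemma winv_nseq c (a : letter A) : winv (nseq c a) = nseq c (inv_letter a).
Proof. by rewrite /winv map_nseq rev_nseq. Qed.

Lemma pw_blk m V : m != 0%R ->
  exists c s, 0 < c /\ pw m V = flatten (map (blk c s) V).
Proof.
case: m => [[|c]|c] // _.
- exists c.+1, false; split => //; rewrite /pw.
  elim: V => [//|[x b] V IH]; rewrite wsubst_cons IH /= /blk /=.
  rewrite flatten_nseq1; case: b => //=.
  by rewrite (winv_nseq c.+1 (x, false)).
- exists c.+1, true; split => //; rewrite /pw.
  elim: V => [//|[x b] V IH]; rewrite wsubst_cons IH /= /blk /=.
  rewrite flatten_nseq1; case: b => //=.
  by rewrite (winv_nseq c.+1 (inv_letter (x, false))) inv_letterK.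
Qed.

Lemma pw_inj m V : m != 0%R -> peq norels (pw m V) [::] -> peq norels V [::].
Proof.
move=> Hm H.
have HV := red_peq norels V.
have H1 : peq norels (pw m (red V)) [::].
  apply: peq_trans H; apply: peq_sym; apply: wsubst_peq HV; exact: homR_norels.
have [c [s [Hc E]]] := pw_blk (red V) Hm.
have := peq_nil_red H1; rewrite E reduced_red; last first.
  by apply: reduced_flatten_blk => //; apply: red_reduced.
case E2: (red V) => [|x W]; first by rewrite -E2.
by rewrite /= /blk; case: c Hc E {E2}.
Qed.

End PowInj.
Lemma wpow_opp (A : Type) (u : word A) m : wpow u (- m)%R = winv (wpow u m).
Proof.
case: m => [[|c]|c] //.
- have -> : (- Posz c.+1)%R = Negz c by [].
  by rewrite /wpow winv_flatten_nseq.
- have -> : (- Negz c)%R = Posz c.+1 by [].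
  by rewrite /wpow winv_flatten_nseq winvK.
Qed.

Section Specific.
Variable n : nat.
Implicit Types (k : 'I_n) (a : fvb_gen n) (w q : word (fvb_gen n)) (V Y : word 'I_n).

Definition idx a : 'I_n.-1 := match a with Sig i => i | Rho i => i end.
Definition sw a k := swp (idx a) k.
Definition tsw a k := match a with Rho i => swp i k | Sig _ => k end.
Definition Ystep a k : word 'I_n :=
  match a with
  | Sig i => if k == lo i then gen (hi i) else if k == hi i then igen (hi i) else [::]
  | Rho _ => [::]
  end.
Definition dstep a k : int :=
  match a with
  | Rho i => if k == lo i then 1%R else if k == hi i then (-1)%R else 0%R
  | Sig _ => 0%R
  end.
Fixpoint pi w k := if w is l :: w' then pi w' (sw l.1 k) else k.
Fixpoint tau w k := if w is l :: w' then tau w' (tsw l.1 k) else k.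
Definition rename (f : 'I_n -> 'I_n) V : word 'I_n := wsubst (fun i => gen (f i)) V.
Fixpoint Vt w k : word 'I_n :=
  if w is l :: w' then Vt w' (sw l.1 k) ++ rename (tau w') (Ystep l.1 k) else [::].
Fixpoint E w k : int := if w is l :: w' then (dstep l.1 k + E w' (sw l.1 k))%R else 0%R.

Definition emb2 V : word (gen2 n) := wsubst (fun i => gen (y2 i)) V.
Definition psi (m : int) V : word (gen2 n) := wsubst (fun i => wpow (gen (y2 i)) m) V.
Definition psi2 V : word (gen3 n) := wsubst (fun i => wconj (gen (y3 i)) (gen (z3 n))) V.
Definition emb3 V : word (gen3 n) := wsubst (fun i => gen (y3 i)) V.
Definition zpow (e : int) : word (gen3 n) := wpow (gen (z3 n)) e.

Lemma wsubst_rename (B : Type) (h : 'I_n -> word B) f V :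
  wsubst h (rename f V) = wsubst (fun i => h (f i)) V.
Proof. by rewrite /rename wsubst_comp; apply: eq_wsubst => i; rewrite wsubst_gen. Qed.

Lemma thetax a k : theta a (x2 k) = gen (x2 (sw a k)) ++ emb2 (Ystep a k).
Proof.
case: a => i; rewrite /theta /sw /swp /Ystep /=; last by [].
by case: (k == lo i) => //; case: (k == hi i).
Qed.

Lemma theta1x m a k : theta1 m a (x2 k) = gen (x2 (sw a k)) ++ psi m (Ystep a k).
Proof.
case: a => i; rewrite /theta1 /sw /swp /Ystep /=; last by [].
case: (k == lo i); first by rewrite /psi wsubst_gen.
case: (k == hi i) => //.
by rewrite /psi wsubst_igen wpow_opp.
Qed.

Lemma theta2x a k : theta2 a (x3 k) = gen (x3 (sw a k)) ++ psi2 (Ystep a k).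
Proof.
case: a => i; rewrite /theta2 /sw /swp /Ystep /=; last by [].
by case: (k == lo i) => //; case: (k == hi i).
Qed.

Lemma theta3x a k : theta3 a (x3 k) = gen (x3 (sw a k)) ++ zpow (dstep a k) ++ emb3 (Ystep a k).
Proof.
case: a => i; rewrite /theta3 /thetaK_sig /sw /swp /Ystep /dstep /=.
  by case: (k == lo i) => //; case: (k == hi i).
by case: (k == lo i) => //; case: (k == hi i).
Qed.

Lemma theta4x a k : theta4 a (x3 k) =
  zpow (- dstep a k)%R ++ gen (x3 (sw a k)) ++ zpow (dstep a k) ++ emb3 (Ystep a k).
Proof.
case: a => i; rewrite /theta4 /thetaK_sig /sw /swp /Ystep /dstep /=.
  by case: (k == lo i) => //; case: (k == hi i).
by case: (k == lo i) => //; case: (k == hi i).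
Qed.

Lemma PhiC_app (Y X : Type) (phi : Y -> X -> word X) l x : PhiC phi l x = phi l.1 x.
Proof. by []. Qed.

Lemma act_y (X : Type) (Phi : letter (fvb_gen n) -> X -> word X) (yc : 'I_n -> X) :
  (forall l k, Phi l (yc k) = gen (yc (tsw l.1 k))) ->
  forall w k, act Phi w (yc k) = gen (yc (tau w k)).
Proof.
move=> H; elim=> [//|l w IH] k; by rewrite act_cons H actw_gen IH.
Qed.

Lemma act_z (X : Type) (Phi : letter (fvb_gen n) -> X -> word X) (z : X) :
  (forall l, Phi l z = gen z) -> forall w, act Phi w z = gen z.
Proof. move=> H; elim=> [//|l w IH]; by rewrite act_cons H actw_gen IH. Qed.

Lemma actw_ywords (X : Type) (Phi : letter (fvb_gen n) -> X -> word X) (h : 'I_n -> word X) w V :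
  (forall i, actw Phi w (h i) = h (tau w i)) ->
  actw Phi w (wsubst h V) = wsubst h (rename (tau w) V).
Proof.
move=> H; rewrite actw_wsubst wsubst_comp wsubst_rename; apply: eq_wsubst => i.
by rewrite -actw_wsubst H.
Qed.

Lemma theta_y l k : PhiC (@theta n) l (y2 k) = gen (y2 (tsw l.1 k)).
Proof. by case: l => [[]]. Qed.
Lemma theta1_y m l k : PhiC (theta1 m) l (y2 k) = gen (y2 (tsw l.1 k)).
Proof. by case: l => [[]]. Qed.
Lemma theta2_y l k : PhiC (@theta2 n) l (y3 k) = gen (y3 (tsw l.1 k)).
Proof. by case: l => [[]]. Qed.
Lemma theta3_y l k : PhiC (@theta3 n) l (y3 k) = gen (y3 (tsw l.1 k)).
Proof. by case: l => [[]]. Qed.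
Lemma theta4_y l k : PhiC (@theta4 n) l (y3 k) = gen (y3 (tsw l.1 k)).
Proof. by case: l => [[]]. Qed.
Lemma theta2_z l : PhiC (@theta2 n) l (z3 n) = gen (z3 n).
Proof. by case: l => [[]]. Qed.
Lemma theta3_z l : PhiC (@theta3 n) l (z3 n) = gen (z3 n).
Proof. by case: l => [[]]. Qed.
Lemma theta4_z l : PhiC (@theta4 n) l (z3 n) = gen (z3 n).
Proof. by case: l => [[]]. Qed.

Lemma track0 w k : act (PhiC (@theta n)) w (x2 k) = gen (x2 (pi w k)) ++ emb2 (Vt w k).
Proof.
elim: w k => [//|l w IH] k.
rewrite act_cons PhiC_app thetax actw_cat actw_gen IH /= /emb2 wsubst_cat.
rewrite (@actw_ywords _ _ (fun i => gen (y2 i))) // => i.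
by rewrite actw_gen (act_y theta_y).
Qed.

Lemma track1 m w k : act (PhiC (theta1 m)) w (x2 k) = gen (x2 (pi w k)) ++ psi m (Vt w k).
Proof.
elim: w k => [//|l w IH] k.
rewrite act_cons PhiC_app theta1x actw_cat actw_gen IH /= /psi wsubst_cat.
rewrite (@actw_ywords _ _ (fun i => wpow (gen (y2 i)) m)) // => i.
by rewrite actw_wpow actw_gen (act_y (theta1_y m)).
Qed.

Lemma track2 w k : act (PhiC (@theta2 n)) w (x3 k) = gen (x3 (pi w k)) ++ psi2 (Vt w k).
Proof.
elim: w k => [//|l w IH] k.
rewrite act_cons PhiC_app theta2x actw_cat actw_gen IH /= /psi2 wsubst_cat.
rewrite (@actw_ywords _ _ (fun i => wconj (gen (y3 i)) (gen (z3 n)))) // => i.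
rewrite /wconj !actw_cat actw_winv !actw_gen (act_y theta2_y).
by rewrite (act_z theta2_z).
Qed.

End Specific.
Ltac ctx p s H := let T := fresh "T" in
  have T := peq_ctx p s H; rewrite -?catA in T *; exact T.

Section KTrack.
Variable n : nat.
Notation K := (@K_rel n).
Implicit Types (k : 'I_n) (a : fvb_gen n) (w q : word (fvb_gen n)) (V Y : word 'I_n).

Lemma comm_zy i : comm K (gen (z3 n)) (gen (y3 i)).
Proof.
rewrite /comm /=.
apply: (peq_trans (v := [:: (z3 n, false); (y3 i, false)] ++
          (igen (y3 i) ++ igen (z3 n) ++ gen (y3 i) ++ gen (z3 n)) ++ [::])).
  apply: peq_sym; have := @peq_rel _ K [:: (z3 n, false); (y3 i, false)] _ [::] (K_comm i).
  by rewrite cats0.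
rewrite /=.
apply: (peq_trans (v := [:: (z3 n, false); (z3 n, true); (y3 i, false); (z3 n, false)])).
  exact: (@peq_cancel _ K [:: (z3 n, false)] (y3 i, false) [:: (z3 n, true); (y3 i, false); (z3 n, false)]).
exact: (@peq_cancel _ K [::] (z3 n, false) [:: (y3 i, false); (z3 n, false)]).
Qed.

Lemma comm_z_emb3 V : comm K (gen (z3 n)) (emb3 V).
Proof.
elim: V => [|l V IH]; first exact: comm_nil.
rewrite /emb3 wsubst_cons; apply: comm_cat => //.
by case: l.2; [apply: comm_winv|]; apply: comm_zy.
Qed.

Lemma comm_zpow_emb3 e V : comm K (zpow n e) (emb3 V).
Proof.
apply: comm_sym; apply: comm_wpow; apply: comm_sym; exact: comm_z_emb3.
Qed.

Lemma dstep_small a k : (dstep a k = 0 \/ dstep a k = 1 \/ dstep a k = -1)%R.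
Proof.
case: a => i /=; first by left.
by case: (k == lo i); [right; left|case: (k == hi i); [right; right|left]].
Qed.

Lemma small_opp (d : int) : (d = 0 \/ d = 1 \/ d = -1)%R -> (-d = 0 \/ -d = 1 \/ -d = -1)%R.
Proof. by case=> [->|[->|->]]; [left|right;right|right;left]. Qed.

Lemma theta3_hom l : is_hom K (PhiC (@theta3 n) l).
Proof.
move=> r [] i; rewrite /PhiC.
case: l => [[]] j _ /=; rewrite ?cats0; apply: peq_rel0; exact: K_comm.
Qed.

Lemma theta4_hom l : is_hom K (PhiC (@theta4 n) l).
Proof.
move=> r [] i; rewrite /PhiC.
case: l => [[]] j _ /=; rewrite ?cats0; apply: peq_rel0; exact: K_comm.
Qed.

Lemma actw_zpow (Phi : letter (fvb_gen n) -> gen3 n -> word (gen3 n)) w e :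
  (forall l, Phi l (z3 n) = gen (z3 n)) -> actw Phi w (zpow n e) = zpow n e.
Proof. by move=> H; rewrite /zpow actw_wpow actw_gen (act_z H). Qed.

Lemma actw_emb3 (Phi : letter (fvb_gen n) -> gen3 n -> word (gen3 n)) w V :
  (forall l k, Phi l (y3 k) = gen (y3 (tsw l.1 k))) ->
  actw Phi w (emb3 V) = emb3 (rename (tau w) V).
Proof.
move=> H; rewrite /emb3 (@actw_ywords _ _ _ (fun i => gen (y3 i))) // => i.
by rewrite actw_gen (act_y H).
Qed.

Lemma track3 w k : peq K (act (PhiC (@theta3 n)) w (x3 k))
  (gen (x3 (pi w k)) ++ zpow n (E w k) ++ emb3 (Vt w k)).
Proof.
elim: w k => [|l w IH] k.
  by rewrite /= /zpow /emb3 /=; apply: peq_refl.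
rewrite act_cons PhiC_app theta3x !actw_cat actw_gen (actw_zpow _ _ (@theta3_z n)).
rewrite (actw_emb3 _ _ (@theta3_y n)) /=.
set d := dstep l.1 k; set k1 := sw l.1 k; set Y' := rename (tau w) (Ystep l.1 k).
apply: (peq_trans (v := (gen (x3 (pi w k1)) ++ zpow n (E w k1) ++ emb3 (Vt w k1))
   ++ zpow n d ++ emb3 Y')); first exact: peq_catr.
rewrite /emb3 wsubst_cat -/(emb3 _) -/(emb3 _).
apply: (peq_trans (v := gen (x3 (pi w k1)) ++ zpow n (E w k1) ++ zpow n d
   ++ emb3 (Vt w k1) ++ emb3 Y')).
  by ctx (gen (x3 (pi w k1)) ++ zpow n (E w k1)) (emb3 Y') (comm_sym (comm_zpow_emb3 d (Vt w k1))).
apply: peq_catl; rewrite catA; apply: peq_catr.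
apply: peq_trans (wpow_add_small _ _ _ (dstep_small l.1 k)).
exact: comm_wpow2 (comm_refl _ _).
Qed.

Lemma track4 w k : peq K (act (PhiC (@theta4 n)) w (x3 k))
  (zpow n (- E w k)%R ++ gen (x3 (pi w k)) ++ zpow n (E w k) ++ emb3 (Vt w k)).
Proof.
elim: w k => [|l w IH] k.
  by rewrite /= /zpow /emb3 /=; apply: peq_refl.
rewrite act_cons PhiC_app theta4x !actw_cat actw_gen !(actw_zpow _ _ (@theta4_z n)).
rewrite (actw_emb3 _ _ (@theta4_y n)) /=.
set d := dstep l.1 k; set k1 := sw l.1 k; set Y' := rename (tau w) (Ystep l.1 k).
apply: (peq_trans (v := zpow n (- d)%R ++ (zpow n (- E w k1)%R ++ gen (x3 (pi w k1))
   ++ zpow n (E w k1) ++ emb3 (Vt w k1)) ++ zpow n d ++ emb3 Y')).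
  by ctx (zpow n (- d)%R) (zpow n d ++ emb3 Y') (IH k1).
rewrite /emb3 wsubst_cat -/(emb3 _) -/(emb3 _).
apply: (peq_trans (v := zpow n (- d)%R ++ zpow n (- E w k1)%R ++ gen (x3 (pi w k1))
   ++ zpow n (E w k1) ++ zpow n d ++ emb3 (Vt w k1) ++ emb3 Y')).
  by ctx (zpow n (- d)%R ++ zpow n (- E w k1)%R ++ gen (x3 (pi w k1)) ++ zpow n (E w k1))
     (emb3 Y') (comm_sym (comm_zpow_emb3 d (Vt w k1))).
rewrite opprD catA; apply: peq_cat.
  exact: wpow_add_small (small_opp (dstep_small l.1 k)).
apply: peq_catl; rewrite catA; apply: peq_catr.
apply: peq_trans (wpow_add_small _ _ _ (dstep_small l.1 k)).
exact: comm_wpow2 (comm_refl _ _).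
Qed.

End KTrack.
Section Equiv.
Variable n : nat.
Notation K := (@K_rel n).
Implicit Types (k : 'I_n) (a : fvb_gen n) (w q : word (fvb_gen n)) (V Y : word 'I_n).

Definition ysum (V : word 'I_n) : int := wt (fun _ => 1%R) V.

Lemma ysum_cat U V : ysum (U ++ V) = (ysum U + ysum V)%R.
Proof. exact: wt_cat. Qed.

Lemma ysum_rename f V : ysum (rename f V) = ysum V.
Proof. by rewrite /ysum /rename wt_wsubst; apply: eq_wt => i /=; rewrite addr0. Qed.

Lemma dstep_formula a k :
  dstep a k = ((Posz (sw a k : nat)) - (Posz (k : nat)) - ysum (Ystep a k))%R.
Proof.
case: a => i; rewrite /dstep /sw /swp /Ystep /=.
- case: eqP => [->|_] /=; first by rewrite /ysum /=; lia.
  case: eqP => [->|_] /=; first by rewrite /ysum /=; lia.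
  by rewrite /ysum /=; lia.
- case: eqP => [->|_] /=; first by rewrite /ysum /=; lia.
  case: eqP => [->|_] /=; first by rewrite /ysum /=; lia.
  by rewrite /ysum /=; lia.
Qed.

Lemma E_formula w k :
  E w k = ((Posz (pi w k : nat)) - (Posz (k : nat)) - ysum (Vt w k))%R.
Proof.
elim: w k => [|l w IH] k /=; first by rewrite /ysum /=; lia.
rewrite IH dstep_formula ysum_cat ysum_rename; lia.
Qed.

Definition Triv w := forall k, pi w k = k /\ tau w k = k /\ peq norels (Vt w k) [::].

Definition TA (X : Type) (R : word X -> Prop) (phi : fvb_gen n -> X -> word X) w :=
  forall x, peq R (act (PhiC phi) w x) (gen x).

Definition xc2 k (g : gen2 n) : int := if g is x2 k' then (Posz (k' == k)) else 0%R.
Definition yc2 k (g : gen2 n) : int := if g is y2 k' then (Posz (k' == k)) else 0%R.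
Definition xc3 k (g : gen3 n) : int := if g is x3 k' then (Posz (k' == k)) else 0%R.
Definition yc3 k (g : gen3 n) : int := if g is y3 k' then (Posz (k' == k)) else 0%R.

Lemma wt_wpow0 (X : Type) (c : X -> int) u m : wt c u = 0%R -> wt c (wpow u m) = 0%R.
Proof.
move=> H; case: m => c0; rewrite /wpow.
  by elim: c0 => [//|c0 IH] /=; rewrite wt_cat H IH addr0.
by elim: c0.+1 => [//|c1 IH] /=; rewrite wt_cat wt_winv H IH oppr0 addr0.
Qed.

Lemma K_wt (c : gen3 n -> int) : c (z3 n) = 0%R -> forall r, K r -> wt c r = 0%R.
Proof.
move=> Hz r [] i /=; rewrite Hz.
by rewrite !oppr0 !addr0 !add0r addNr.
Qed.

Lemma norels_wt (X : Type) (c : X -> int) r : norels r -> wt c r = 0%R.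
Proof. by []. Qed.

Lemma gen_eq_k (X : Type) (R : word X -> Prop) (xx : 'I_n -> X) (c : 'I_n -> X -> int) k k' rest :
  (forall r, R r -> wt (c k) r = 0%R) -> (forall j, c k (xx j) = (Posz (j == k))) ->
  wt (c k) rest = 0%R ->
  peq R (gen (xx k') ++ rest) (gen (xx k)) -> k' = k.
Proof.
move=> HR Hc Hrest H; have := peq_wt HR H.
rewrite wt_cat Hrest /= !Hc eqxx addr0 !addr0.
by case: eqP.
Qed.

Lemma peq_cancel_prefix (X : Type) (R : word X -> Prop) (g : X) u :
  peq R (gen g ++ u) (gen g) -> peq R u [::].
Proof.
move=> H.
have H1 := peq_catl (igen g) H.
have H2 : peq R (igen g ++ gen g ++ u) u.
  exact: (@peq_cancel _ R [::] (g, true) u).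
have H3 : peq R (igen g ++ gen g) [::].
  exact: (@peq_cancel _ R [::] (g, true) [::]).
exact: peq_trans (peq_sym H2) (peq_trans H1 H3).
Qed.

Definition ret2 (g : gen2 n) : word 'I_n := if g is y2 i then gen i else [::].
Definition ret3 (g : gen3 n) : word 'I_n := if g is y3 i then gen i else [::].

Lemma ret3_hom : homR K norels ret3.
Proof. move=> r [] i /=; exact: (@peq_cancel _ norels [::] (i, true) [::]). Qed.

Lemma ret2_emb2 V : wsubst ret2 (emb2 V) = V.
Proof. by rewrite /emb2 wsubst_comp -[RHS]wsubst_id; apply: eq_wsubst. Qed.
Lemma ret2_psi m V : wsubst ret2 (psi m V) = pw m V.
Proof. by rewrite /psi wsubst_comp; apply: eq_wsubst => i; rewrite wsubst_wpow. Qed.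
Lemma ret3_psi2 V : wsubst ret3 (psi2 V) = V.
Proof. by rewrite /psi2 wsubst_comp -[RHS]wsubst_id; apply: eq_wsubst. Qed.
Lemma ret3_emb3 V : wsubst ret3 (emb3 V) = V.
Proof. by rewrite /emb3 wsubst_comp -[RHS]wsubst_id; apply: eq_wsubst. Qed.
Lemma ret3_zpow e : wsubst ret3 (zpow n e) = [::].
Proof. by rewrite /zpow wsubst_wpow wpow_nil. Qed.

Lemma wt_emb2 k V : wt (xc2 k) (emb2 V) = 0%R.
Proof. by rewrite /emb2 wt_wsubst -(wt0 V); apply: eq_wt. Qed.
Lemma wt_psi k m V : wt (xc2 k) (psi m V) = 0%R.
Proof. by rewrite /psi wt_wsubst -(wt0 V); apply: eq_wt => i; rewrite wt_wpow0. Qed.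
Lemma wt_psi2 k V : wt (xc3 k) (psi2 V) = 0%R.
Proof. by rewrite /psi2 wt_wsubst -(wt0 V); apply: eq_wt. Qed.
Lemma wt_emb3 k V : wt (xc3 k) (emb3 V) = 0%R.
Proof. by rewrite /emb3 wt_wsubst -(wt0 V); apply: eq_wt. Qed.
Lemma wt_zpow k e : wt (xc3 k) (zpow n e) = 0%R.
Proof. by rewrite /zpow wt_wpow0. Qed.

Lemma tau_from_y (X : Type) (R : word X -> Prop) (yy : 'I_n -> X) (c : 'I_n -> X -> int) w k :
  (forall r, R r -> wt (c k) r = 0%R) -> (forall j, c k (yy j) = (Posz (j == k))) ->
  peq R (gen (yy (tau w k))) (gen (yy k)) -> tau w k = k.
Proof.
move=> HR Hc H; apply: (gen_eq_k HR Hc _ (rest := [::])) => //.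
Qed.

Lemma TA0 w : TA norels (@theta n) w <-> Triv w.
Proof.
split.
- move=> H k.
  have Hx := H (x2 k); rewrite track0 in Hx.
  have Hpi : pi w k = k.
    by apply: (gen_eq_k (@norels_wt _ _) (c := xc2) (xx := @x2 n) _ (wt_emb2 k _) Hx).
  have Hy := H (y2 k); rewrite (act_y (@theta_y n)) in Hy.
  split=> //; split; first exact: (tau_from_y (@norels_wt _ _) (c := yc2) (yy := @y2 n)).
  rewrite Hpi in Hx; have := wsubst_peq (homR_norels _ ret2) (peq_cancel_prefix Hx).
  by rewrite ret2_emb2.
- move=> H [k|k]; have [H1 [H2 H3]] := H k.
  + rewrite track0 H1 -[X in peq _ _ X]cats0; apply: peq_catl.
    exact: (wsubst_peq (homR_norels _ _) H3).
  + rewrite (act_y (@theta_y n)) H2; exact: peq_refl.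
Qed.

Lemma TA1 m w : m != 0%R -> (TA norels (theta1 m) w <-> Triv w).
Proof.
move=> Hm; split.
- move=> H k.
  have Hx := H (x2 k); rewrite track1 in Hx.
  have Hpi : pi w k = k.
    by apply: (gen_eq_k (@norels_wt _ _) (c := xc2) (xx := @x2 n) _ (wt_psi k m _) Hx).
  have Hy := H (y2 k); rewrite (act_y (theta1_y m)) in Hy.
  split=> //; split; first exact: (tau_from_y (@norels_wt _ _) (c := yc2) (yy := @y2 n)).
  rewrite Hpi in Hx; have := wsubst_peq (homR_norels _ ret2) (peq_cancel_prefix Hx).
  by rewrite ret2_psi => H'; exact: (pw_inj Hm (H' norels)).
- move=> H [k|k]; have [H1 [H2 H3]] := H k.
  + rewrite track1 H1 -[X in peq _ _ X]cats0; apply: peq_catl.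
    exact: (wsubst_peq (homR_norels _ _) H3).
  + rewrite (act_y (theta1_y m)) H2; exact: peq_refl.
Qed.

Lemma TA2 w : TA norels (@theta2 n) w <-> Triv w.
Proof.
split.
- move=> H k.
  have Hx := H (x3 k); rewrite track2 in Hx.
  have Hpi : pi w k = k.
    by apply: (gen_eq_k (@norels_wt _ _) (c := xc3) (xx := @x3 n) _ (wt_psi2 k _) Hx).
  have Hy := H (y3 k); rewrite (act_y (@theta2_y n)) in Hy.
  split=> //; split; first exact: (tau_from_y (@norels_wt _ _) (c := yc3) (yy := @y3 n)).
  rewrite Hpi in Hx; have := wsubst_peq (homR_norels _ ret3) (peq_cancel_prefix Hx).
  by rewrite ret3_psi2.
- move=> H [k|k|]; first (have [H1 [H2 H3]] := H k).
  + rewrite track2 H1 -[X in peq _ _ X]cats0; apply: peq_catl.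
    exact: (wsubst_peq (homR_norels _ _) H3).
  + have [H1 [H2 H3]] := H k.
    rewrite (act_y (@theta2_y n)) H2; exact: peq_refl.
  + rewrite (act_z (@theta2_z n)); exact: peq_refl.
Qed.

Lemma Triv_E w k : Triv w -> E w k = 0%R.
Proof.
move=> H; have [H1 [_ H3]] := H k.
rewrite E_formula H1 /ysum (peq_wt (@norels_wt _ _) H3) /=; lia.
Qed.

Lemma TA3 w : TA K (@theta3 n) w <-> Triv w.
Proof.
split.
- move=> H k.
  have Hx := peq_trans (peq_sym (track3 w k)) (H (x3 k)).
  have Hpi : pi w k = k.
    apply: (gen_eq_k (K_wt (c := xc3 k) erefl) (c := xc3) (xx := @x3 n) _ _ Hx) => //.
    by rewrite wt_cat wt_zpow wt_emb3.
  have Hy := H (y3 k); rewrite (act_y (@theta3_y n)) in Hy.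
  split=> //; split; first exact: (tau_from_y (K_wt (c := yc3 k) erefl) (c := yc3) (yy := @y3 n)).
  have := wsubst_peq ret3_hom Hx.
  by rewrite !wsubst_cat ret3_zpow ret3_emb3.
- move=> H [k|k|]; first (have [H1 [H2 H3]] := H k).
  + apply: peq_trans (track3 w k) _; rewrite H1 (Triv_E k H) /zpow wpow0 cat0s -[X in peq _ _ X]cats0.
    apply: peq_catl; exact: (wsubst_peq (homR_norels _ _) H3).
  + have [H1 [H2 H3]] := H k.
    rewrite (act_y (@theta3_y n)) H2; exact: peq_refl.
  + rewrite (act_z (@theta3_z n)); exact: peq_refl.
Qed.

Lemma TA4 w : TA K (@theta4 n) w <-> Triv w.
Proof.
split.
- move=> H k.
  have Hx := peq_trans (peq_sym (track4 w k)) (H (x3 k)).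
  have Hpi : pi w k = k.
    have := peq_wt (K_wt (c := xc3 k) erefl) Hx.
    rewrite !wt_cat !wt_zpow wt_emb3 /= eqxx.
    by case: eqP.
  have Hy := H (y3 k); rewrite (act_y (@theta4_y n)) in Hy.
  split=> //; split; first exact: (tau_from_y (K_wt (c := yc3 k) erefl) (c := yc3) (yy := @y3 n)).
  have := wsubst_peq ret3_hom Hx.
  by rewrite !wsubst_cat !ret3_zpow ret3_emb3.
- move=> H [k|k|]; first (have [H1 [H2 H3]] := H k).
  + apply: peq_trans (track4 w k) _; rewrite H1 (Triv_E k H) oppr0 /zpow wpow0 cat0s -[X in peq _ _ X]cats0.
    apply: peq_catl; exact: (wsubst_peq (homR_norels _ _) H3).
  + have [H1 [H2 H3]] := H k.
    rewrite (act_y (@theta4_y n)) H2; exact: peq_refl.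
  + rewrite (act_z (@theta4_z n)); exact: peq_refl.
Qed.

End Equiv.
Section Transfer.
Variables n0 n : nat.
Variable iota : 'I_n0 -> 'I_n.
Hypothesis iota_inj : injective iota.
Variable li : 'I_n0.-1 -> 'I_n.-1.

Definition Lg (a : fvb_gen n0) : fvb_gen n :=
  match a with Sig i => Sig (li i) | Rho i => Rho (li i) end.
Definition good (i0 : 'I_n0.-1) := iota (lo i0) = lo (li i0) /\ iota (hi i0) = hi (li i0).
Definition mapL (q : word (fvb_gen n0)) : word (fvb_gen n) := map (fun l => (Lg l.1, l.2)) q.
Fixpoint allgood (q : word (fvb_gen n0)) : Prop :=
  if q is l :: q' then good (idx l.1) /\ allgood q' else True.
Definition rn (V : word 'I_n0) : word 'I_n := wsubst (fun i => gen (iota i)) V.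

Lemma swp_tr i0 k : good i0 -> swp (li i0) (iota k) = iota (swp i0 k).
Proof.
case=> G1 G2; rewrite /swp -G1 -G2 !(inj_eq iota_inj).
by case: (k == lo i0) => //; case: (k == hi i0).
Qed.

Lemma swp_out i0 k : good i0 -> (forall k0, iota k0 != k) -> swp (li i0) k = k.
Proof.
case=> G1 G2 Hn; rewrite /swp -G1 -G2.
by rewrite eq_sym (negbTE (Hn _)) eq_sym (negbTE (Hn _)).
Qed.

Lemma sw_tr a k : good (idx a) -> sw (Lg a) (iota k) = iota (sw a k).
Proof. by case: a => i /= G; rewrite /sw /=; apply: swp_tr. Qed.
Lemma tsw_tr a k : good (idx a) -> tsw (Lg a) (iota k) = iota (tsw a k).
Proof. by case: a => i /= G //; apply: swp_tr. Qed.
Lemma Y_tr a k : good (idx a) -> Ystep (Lg a) (iota k) = rn (Ystep a k).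
Proof.
case: a => i /= [G1 G2] //; rewrite -G1 -G2 !(inj_eq iota_inj).
by case: (k == lo i) => //; case: (k == hi i).
Qed.
Lemma sw_out a k : good (idx a) -> (forall k0, iota k0 != k) -> sw (Lg a) k = k.
Proof. by case: a => i /= G Hn; rewrite /sw /=; apply: swp_out. Qed.
Lemma tsw_out a k : good (idx a) -> (forall k0, iota k0 != k) -> tsw (Lg a) k = k.
Proof. by case: a => i /= G Hn //; apply: swp_out. Qed.
Lemma Y_out a k : good (idx a) -> (forall k0, iota k0 != k) -> Ystep (Lg a) k = [::].
Proof.
case: a => i /= [G1 G2] Hn //; rewrite -G1 -G2.
by rewrite eq_sym (negbTE (Hn _)) eq_sym (negbTE (Hn _)).
Qed.

Lemma pi_tr q k : allgood q -> pi (mapL q) (iota k) = iota (pi q k).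
Proof. by elim: q k => [//|l q IH] k /= [G H]; rewrite sw_tr // IH. Qed.
Lemma tau_tr q k : allgood q -> tau (mapL q) (iota k) = iota (tau q k).
Proof. by elim: q k => [//|l q IH] k /= [G H]; rewrite tsw_tr // IH. Qed.
Lemma pi_out q k : allgood q -> (forall k0, iota k0 != k) -> pi (mapL q) k = k.
Proof. by elim: q => [//|l q IH] /= [G H] Hn; rewrite sw_out // IH. Qed.
Lemma Vt_tr q k : allgood q -> Vt (mapL q) (iota k) = rn (Vt q k).
Proof.
elim: q k => [//|l q IH] k /= [G H]; rewrite sw_tr // IH // Y_tr // /rn wsubst_cat.
congr (_ ++ _); rewrite /rename !wsubst_comp; apply: eq_wsubst => i.
by rewrite !wsubst_gen /= tau_tr.
Qed.
Lemma Vt_out q k : allgood q -> (forall k0, iota k0 != k) -> Vt (mapL q) k = [::].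
Proof.
elim: q => [//|l q IH] /= [G H] Hn; rewrite sw_out // IH // Y_out //.
Qed.
Lemma tau_out q k : allgood q -> (forall k0, iota k0 != k) -> tau (mapL q) k = k.
Proof. by elim: q => [//|l q IH] /= [G H] Hn; rewrite tsw_out // IH. Qed.

Lemma model_triv q : allgood q ->
  [forall k0, pi q k0 == k0] -> [forall k0, tau q k0 == k0] ->
  [forall k0, red (Vt q k0) == [::]] -> Triv (mapL q).
Proof.
move=> G /forallP Hpi /forallP Htau /forallP Hv k.
case: (pickP (fun k0 => iota k0 == k)) => [k0 /eqP <-|Hn].
- rewrite pi_tr // tau_tr // Vt_tr // (eqP (Hpi k0)) (eqP (Htau k0)).
  split=> //; split=> //.
  have H1 := red_peq norels (Vt q k0); rewrite (eqP (Hv k0)) in H1.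
  exact: (wsubst_peq (homR_norels _ _) H1).
- have Hn' : forall k0, iota k0 != k by move=> k0; rewrite Hn.
  rewrite pi_out // tau_out // Vt_out //; split=> //; split=> //; exact: peq_refl.
Qed.

End Transfer.
Definition mcheck n0 (q : word (fvb_gen n0)) (s : seq 'I_n0) : bool :=
  all (fun k0 => (pi q k0 == k0) && (tau q k0 == k0) && (red (Vt q k0) == [::])) s.

Lemma mcheck_triv n0 n (iota : 'I_n0 -> 'I_n) li q s : injective iota -> allgood iota li q ->
  (forall k, k \in s) -> mcheck q s -> Triv (mapL li q).
Proof.
move=> Hi G Hs /allP H; apply: (model_triv Hi G); apply/forallP => k0;
  by have /andP [/andP [H1 H2] H3] := H k0 (Hs k0).
Qed.

Definition en2 : seq 'I_2 := [:: @Ordinal 2 0 isT; @Ordinal 2 1 isT].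
Definition en3 : seq 'I_3 := [:: @Ordinal 3 0 isT; @Ordinal 3 1 isT; @Ordinal 3 2 isT].
Definition en4 : seq 'I_4 :=
  [:: @Ordinal 4 0 isT; @Ordinal 4 1 isT; @Ordinal 4 2 isT; @Ordinal 4 3 isT].

Lemma enP n0 (s : seq 'I_n0) : map val s = iota 0 n0 -> forall k, k \in s.
Proof. by move=> E k; rewrite -(mem_map val_inj) E mem_iota ltn_ord. Qed.

Definition en1 : seq 'I_1 := [:: @Ordinal 1 0 isT].
Lemma en1P k : k \in en1. Proof. exact: enP. Qed.
Lemma en2P k : k \in en2. Proof. exact: enP. Qed.
Lemma en3P k : k \in en3. Proof. exact: enP. Qed.
Lemma en4P k : k \in en4. Proof. exact: enP. Qed.

Definition o0 {m} : 'I_m.+1 := @Ordinal m.+1 0 isT.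
Definition o1 {m} : 'I_m.+2 := @Ordinal m.+2 1 isT.
Definition o2 {m} : 'I_m.+3 := @Ordinal m.+3 2 isT.

Definition q_sss := (Defs.eqrel (gen (@Sig 3 o0) ++ gen (@Sig 3 o1) ++ gen (@Sig 3 o0))
                   (gen (@Sig 3 o1) ++ gen (@Sig 3 o0) ++ gen (@Sig 3 o1))).
Lemma chk_sss : mcheck q_sss en3.
Proof. vm_compute. reflexivity. Qed.

Definition q_rrr := (Defs.eqrel (gen (@Rho 3 o0) ++ gen (@Rho 3 o1) ++ gen (@Rho 3 o0))
                   (gen (@Rho 3 o1) ++ gen (@Rho 3 o0) ++ gen (@Rho 3 o1))).
Lemma chk_rrr : mcheck q_rrr en3.
Proof. vm_compute. reflexivity. Qed.
Definition q_rrs := (Defs.eqrel (gen (@Rho 3 o0) ++ gen (@Rho 3 o1) ++ gen (@Sig 3 o0))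
                   (gen (@Sig 3 o1) ++ gen (@Rho 3 o0) ++ gen (@Rho 3 o1))).
Lemma chk_rrs : mcheck q_rrs en3.
Proof. vm_compute. reflexivity. Qed.
Definition q_ss := (Defs.eqrel (gen (@Sig 4 o0) ++ gen (@Sig 4 o2))
                   (gen (@Sig 4 o2) ++ gen (@Sig 4 o0))).
Lemma chk_ss : mcheck q_ss en4.
Proof. vm_compute. reflexivity. Qed.
Definition q_rr := (Defs.eqrel (gen (@Rho 4 o0) ++ gen (@Rho 4 o2))
                   (gen (@Rho 4 o2) ++ gen (@Rho 4 o0))).
Lemma chk_rr : mcheck q_rr en4.
Proof. vm_compute. reflexivity. Qed.
Definition q_sr := (Defs.eqrel (gen (@Sig 4 o0) ++ gen (@Rho 4 o2))
                   (gen (@Rho 4 o2) ++ gen (@Sig 4 o0))).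
Lemma chk_sr : mcheck q_sr en4.
Proof. vm_compute. reflexivity. Qed.
Definition q_r2 := (gen (@Rho 2 o0) ++ gen (@Rho 2 o0)).
Lemma chk_r2 : mcheck q_r2 en2.
Proof. vm_compute. reflexivity. Qed.
Definition q_s2 := (gen (@Sig 2 o0) ++ gen (@Sig 2 o0)).
Lemma chk_s2 : mcheck q_s2 en2.
Proof. vm_compute. reflexivity. Qed.

Section Models.
Variable n : nat.
Variables i j : 'I_n.-1.

Definition iotaA (k : 'I_2) : 'I_n := if val k == 0 then lo i else hi i.
Definition liA (a : 'I_(2.-1)) : 'I_n.-1 := i.
Definition iotaB (k : 'I_3) : 'I_n :=
  if val k == 0 then lo i else if val k == 1 then hi i else hi j.
Definition liB (a : 'I_(3.-1)) : 'I_n.-1 := if val a == 0 then i else j.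
Definition iotaC (k : 'I_4) : 'I_n :=
  if val k == 0 then lo i else if val k == 1 then hi i else if val k == 2 then lo j else hi j.
Definition liC (a : 'I_(4.-1)) : 'I_n.-1 := if val a == 0 then i else j.

Lemma injA : injective iotaA.
Proof.
move=> k1 k2 /(congr1 val) H; apply: val_inj; move: H.
by case: k1 => [[|[|?]] ?] //; case: k2 => [[|[|?]] ?] //=; lia.
Qed.

Lemma injB : j = i.+1 :> nat -> injective iotaB.
Proof.
move=> Hj k1 k2 /(congr1 val) H; apply: val_inj; move: H.
by case: k1 => [[|[|[|?]]] ?] //; case: k2 => [[|[|[|?]]] ?] //=; lia.
Qed.

Lemma injC : far i j -> injective iotaC.
Proof.
rewrite /far => Hf k1 k2 /(congr1 val) H; apply: val_inj; move: H.
by case: k1 => [[|[|[|[|?]]]] ?] //; case: k2 => [[|[|[|[|?]]]] ?] //=; lia.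
Qed.

Lemma goodA0 : good iotaA liA o0. Proof. by []. Qed.
Lemma goodB0 : good iotaB liB o0. Proof. by []. Qed.
Lemma goodB1 : j = i.+1 :> nat -> good iotaB liB o1.
Proof. by move=> Hj; split=> //; apply: val_inj; rewrite /= Hj. Qed.
Lemma goodC0 : good iotaC liC o0. Proof. by []. Qed.
Lemma goodC2 : good iotaC liC o2. Proof. by []. Qed.

End Models.

Lemma rel_triv n (q : word (fvb_gen n)) : fvb_rel q -> Triv q.
Proof.
case.
- move=> i j Hf.
  exact (mcheck_triv (q := q_ss) (iota := iotaC i j) (li := liC i j) (injC Hf)
           (conj (goodC0 i j) (conj (goodC2 i j) (conj (goodC0 i j) (conj (goodC2 i j) I))))
           en4P chk_ss).
- move=> i j Hf.
  exact (mcheck_triv (q := q_rr) (iota := iotaC i j) (li := liC i j) (injC Hf)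
           (conj (goodC0 i j) (conj (goodC2 i j) (conj (goodC0 i j) (conj (goodC2 i j) I))))
           en4P chk_rr).
- move=> i j Hf.
  exact (mcheck_triv (q := q_sr) (iota := iotaC i j) (li := liC i j) (injC Hf)
           (conj (goodC0 i j) (conj (goodC2 i j) (conj (goodC0 i j) (conj (goodC2 i j) I))))
           en4P chk_sr).
- move=> i j Hj; have g0 := goodB0 i j; have g1 := goodB1 Hj.
  exact (mcheck_triv (q := q_sss) (iota := iotaB i j) (li := liB i j) (injB Hj)
           (conj g0 (conj g1 (conj g0 (conj g1 (conj g0 (conj g1 I))))))
           en3P chk_sss).
- move=> i j Hj; have g0 := goodB0 i j; have g1 := goodB1 Hj.
  exact (mcheck_triv (q := q_rrr) (iota := iotaB i j) (li := liB i j) (injB Hj)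
           (conj g0 (conj g1 (conj g0 (conj g1 (conj g0 (conj g1 I))))))
           en3P chk_rrr).
- move=> i j Hj; have g0 := goodB0 i j; have g1 := goodB1 Hj.
  exact (mcheck_triv (q := q_rrs) (iota := iotaB i j) (li := liB i j) (injB Hj)
           (conj g0 (conj g1 (conj g0 (conj g1 (conj g0 (conj g1 I))))))
           en3P chk_rrs).
- move=> i.
  exact (mcheck_triv (q := q_r2) (iota := iotaA i) (li := liA i) (@injA n i)
           (conj (@goodA0 n i) (conj (@goodA0 n i) I)) en2P chk_r2).
- move=> i.
  exact (mcheck_triv (q := q_s2) (iota := iotaA i) (li := liA i) (@injA n i)
           (conj (@goodA0 n i) (conj (@goodA0 n i) I)) en2P chk_s2).
Qed.
Lemma witness_from n (X : Type) (R : word X -> Prop) (phi : fvb_gen n -> X -> word X) :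
  (forall l, is_hom R (PhiC phi l)) ->
  (forall q, fvb_rel q -> TA R phi q) ->
  rep_witness (@fvb_rel n) R phi (PhiC phi).
Proof.
move=> Hh Hq; split => //.
  move=> [a b] x; rewrite /inv_letter /=.
  have Hr : fvb_rel (gen a ++ gen a) by case: a => i; [exact: fr_s2 | exact: fr_r2].
  by have := Hq _ Hr x; rewrite act_cons actw_cons /=.
Qed.

Lemma norels_hom (X : Type) (f : X -> word X) : is_hom norels f.
Proof. by []. Qed.

Lemma W0 n : rep_witness (@fvb_rel n) norels (@theta n) (PhiC (@theta n)).
Proof.
apply: witness_from => [l|q Hq]; first exact: norels_hom.
by apply/TA0; apply: rel_triv.
Qed.
Lemma W1 n m : rep_witness (@fvb_rel n) norels (theta1 m) (PhiC (theta1 m)).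
Proof.
apply: witness_from => [l|q Hq]; first exact: norels_hom.
have HT := rel_triv Hq.
case: m => [[|c]|c]; last 2 first.
- by apply/TA1 => //.
- by apply/TA1 => //.
(* m = 0 : theta1 0 acts like theta with trivial y-part *)
move=> x; case: x => k.
- rewrite track1; have [H1 [H2 H3]] := HT k; rewrite H1 -[X in peq _ _ X]cats0.
  apply: peq_catl; exact: (wsubst_peq (homR_norels _ _) H3).
- have [H1 [H2 H3]] := HT k.
  rewrite (act_y (theta1_y 0)) H2; exact: peq_refl.
Qed.
Lemma W2 n : rep_witness (@fvb_rel n) norels (@theta2 n) (PhiC (@theta2 n)).
Proof.
apply: witness_from => [l|q Hq]; first exact: norels_hom.
by apply/TA2; apply: rel_triv.
Qed.
Lemma W3 n : rep_witness (@fvb_rel n) (@K_rel n) (@theta3 n) (PhiC (@theta3 n)).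
Proof.
apply: witness_from => [l|q Hq]; first exact: theta3_hom.
by apply/TA3; apply: rel_triv.
Qed.
Lemma W4 n : rep_witness (@fvb_rel n) (@K_rel n) (@theta4 n) (PhiC (@theta4 n)).
Proof.
apply: witness_from => [l|q Hq]; first exact: theta4_hom.
by apply/TA4; apply: rel_triv.
Qed.

Theorem theorem6 (n : nat) (hn : 2 <= n) :
  (* (1) the assignments extend to representations *)
  ((forall m : int, extends_to_rep (@fvb_rel n) norels (theta1 m))
   /\ extends_to_rep (@fvb_rel n) norels (@theta2 n)
   /\ extends_to_rep (@fvb_rel n) (@K_rel n) (@theta3 n)
   /\ extends_to_rep (@fvb_rel n) (@K_rel n) (@theta4 n))
  /\
  (* (2) equality of kernels (as sets of words representing elements of FVB_n) *)
  ((forall m : int, m != 0 -> forall w : word (fvb_gen n),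
      in_ker (@fvb_rel n) norels (theta1 m) w <-> in_ker (@fvb_rel n) norels (@theta n) w)
   /\ (forall w : word (fvb_gen n),
      in_ker (@fvb_rel n) norels (@theta2 n) w <-> in_ker (@fvb_rel n) norels (@theta n) w)
   /\ (forall w : word (fvb_gen n),
      in_ker (@fvb_rel n) (@K_rel n) (@theta3 n) w <-> in_ker (@fvb_rel n) norels (@theta n) w)
   /\ (forall w : word (fvb_gen n),
      in_ker (@fvb_rel n) (@K_rel n) (@theta4 n) w <-> in_ker (@fvb_rel n) norels (@theta n) w)).
Proof.
split.
  split; first by move=> m; exists (PhiC (theta1 m)); exact: W1.
  split; first by exists (PhiC (@theta2 n)); exact: W2.
  split; first by exists (PhiC (@theta3 n)); exact: W3.
  by exists (PhiC (@theta4 n)); exact: W4.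
have K0 w : in_ker (@fvb_rel n) norels (@theta n) w <-> Triv w.
  by rewrite (in_ker_iff _ (W0 n)); exact: TA0.
split.
  move=> m Hm w; rewrite K0 (in_ker_iff _ (W1 n m)); exact: TA1.
split.
  move=> w; rewrite K0 (in_ker_iff _ (W2 n)); exact: TA2.
split.
  move=> w; rewrite K0 (in_ker_iff _ (W3 n)); exact: TA3.
move=> w; rewrite K0 (in_ker_iff _ (W4 n)); exact: TA4.
Qed.
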